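(* Suppose $\|\cdot\| = \|\cdot\|_2$ and $\omega(x) = \|x\|_2^2/2$, and that $F$ is Lipschitz continuous: $\|F(x) - F(y)\|_2 \le L\|x-y\|_2$ for all $x,y \in X$. If, for some $x \in X$ and $\gamma > 0$, $\|R_\gamma(x)\| \le \epsilon$, then the point $x^+ := P_x(\gamma F(x)) = \Pi_X(x - \gamma F(x))$ is an $((L\gamma + 1)\epsilon, 0)$-strong solution of $\mathrm{VI}(X,F)$. In particular, if $\gamma \le 1/L$, then $x^+$ is a $(2\epsilon, 0)$-strong solution of $\mathrm{VI}(X,F)$.
   Context: $X \subseteq \mathbb{R}^n$ is a nonempty closed convex set, $F: X\to\mathbb{R}^n$ is continuous, and $\Pi_X$ is the Euclidean projection onto $X$. With $\omega(x) = \|x\|_2^2/2$, the prox-mapping is $P_x(\phi) = \arg\min_{z\in X}\{\langle\phi,z\rangle + \tfrac12\|z-x\|_2^2\} = \Pi_X(x-\phi)$, and the residual is $R_\gamma(x) = \frac{1}{\gamma}[x - \Pi_X(x - \gamma F(x))]$. For $\phi \in \mathbb{R}^n$, $\tilde g(x,\phi) = \sup_{z \in X}\langle F(x) + \phi, x - z\rangle$. A point $x\in X$ is an $(\epsilon,\delta)$-strong solution of $\mathrm{VI}(X,F)$ if there exists $\phi$ with $\|\phi\|_2 \le \epsilon$ and $\tilde g(x,\phi) \le \delta$. *)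

(* Defs.v *)
From HB Require Import structures.
From mathcomp Require Import all_boot all_order all_algebra.
From mathcomp Require Import all_classical all_reals all_analysis.
Set Implicit Arguments. Unset Strict Implicit. Unset Printing Implicit Defensive.
Import Order.TTheory GRing.Theory Num.Theory.
Import numFieldNormedType.Exports.
Local Open Scope classical_set_scope.
Local Open Scope ring_scope.

Section Defs.
Variables (R : realType) (n : nat).
Notation V := 'rV[R]_n.

Definition dotp (u v : V) : R := \sum_(i < n) u ord0 i * v ord0 i.
Definition norm2 (u : V) : R := Num.sqrt (dotp u u).

Definition is_euclid_proj (X : set V) (P : V -> V) : Prop :=
  forall y, X (P y) /\ (forall z, X z -> norm2 (y - P y) <= norm2 (y - z)).

Definition residual (P : V -> V) (F : V -> V) (gamma : R) (x : V) : V :=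
  gamma^-1 *: (x - P (x - gamma *: F x)).

Definition gtilde (X : set V) (F : V -> V) (x phi : V) : \bar R :=
  ereal_sup [set (dotp (F x + phi) (x - z))%:E | z in X].

Definition strong_solution (X : set V) (F : V -> V) (eps delta : R) (x : V) : Prop :=
  X x /\ exists phi : V, norm2 phi <= eps /\ (gtilde X F x phi <= delta%:E)%E.

End Defs.

(* Main.v *)
Require Import Defs.
From HB Require Import structures.
From mathcomp Require Import all_boot all_order all_algebra.
From mathcomp Require Import all_classical all_reals all_analysis.
From mathcomp Require Import lra.
Import Order.TTheory GRing.Theory Num.Theory.
Import numFieldNormedType.Exports.
Local Open Scope classical_set_scope.
Local Open Scope ring_scope.
Set Implicit Arguments. Unset Strict Implicit.

Section H.
Variables (R : realType) (n : nat).
Notation V := 'rV[R]_n.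
Implicit Types u v w : V.

Lemma dotpC u v : dotp u v = dotp v u.
Proof. by apply: eq_bigr => i _; rewrite mulrC. Qed.
Lemma dotpDl u v w : dotp (u + v) w = dotp u w + dotp v w.
Proof. by rewrite /dotp -big_split; apply: eq_bigr => i _; rewrite !mxE mulrDl. Qed.
Lemma dotpZl (c : R) u w : dotp (c *: u) w = c * dotp u w.
Proof. by rewrite /dotp mulr_sumr; apply: eq_bigr => i _; rewrite !mxE mulrA. Qed.
Lemma dotpNl u w : dotp (- u) w = - dotp u w.
Proof. by rewrite -scaleN1r dotpZl mulN1r. Qed.
Lemma dotpBl u v w : dotp (u - v) w = dotp u w - dotp v w.
Proof. by rewrite dotpDl dotpNl. Qed.
Lemma dotpDr u v w : dotp w (u + v) = dotp w u + dotp w v.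
Proof. by rewrite dotpC dotpDl !(dotpC w). Qed.
Lemma dotpZr (c : R) u w : dotp w (c *: u) = c * dotp w u.
Proof. by rewrite dotpC dotpZl dotpC. Qed.
Lemma dotpNr u w : dotp w (- u) = - dotp w u.
Proof. by rewrite dotpC dotpNl dotpC. Qed.
Lemma dotpBr u v w : dotp w (u - v) = dotp w u - dotp w v.
Proof. by rewrite dotpDr dotpNr. Qed.
Lemma dotp_ge0 u : 0 <= dotp u u.
Proof. by apply: sumr_ge0 => i _; rewrite -expr2 sqr_ge0. Qed.
Lemma norm2_ge0 u : 0 <= norm2 u.
Proof. exact: sqrtr_ge0. Qed.
Lemma norm2_sq u : norm2 u ^+ 2 = dotp u u.
Proof. by rewrite /norm2 sqr_sqrtr // dotp_ge0. Qed.
Lemma norm2_le u v : norm2 u <= norm2 v -> dotp u u <= dotp v v.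
Proof. by rewrite /norm2 ler_sqrt // dotp_ge0. Qed.

Lemma norm2_eq0 u w : norm2 u = 0 -> dotp u w = 0.
Proof.
move=> h; have h2 : dotp u u = 0 by rewrite -norm2_sq h expr0n.
have /psumr_eq0P H : \sum_(i < n) u ord0 i * u ord0 i = 0 by [].
rewrite /dotp big1 // => i _.
have : u ord0 i * u ord0 i = 0 by apply: H => // j _; rewrite -expr2 sqr_ge0.
by move/eqP; rewrite mulf_eq0 orbb => /eqP ->; rewrite mul0r.
Qed.

Lemma cauchy u v : dotp u v <= norm2 u * norm2 v.
Proof.
set c := dotp u v; set a := norm2 u; set b := norm2 v.
have a0 : 0 <= a := norm2_ge0 u; have b0 : 0 <= b := norm2_ge0 v.
have [a00|ap] := eqVneq a 0.
  by rewrite /c norm2_eq0 // mulr_ge0.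
have apos : 0 < a by rewrite lt_neqAle eq_sym ap.
have A0 : 0 < a ^+ 2 by rewrite exprn_gt0.
pose t := c / a ^+ 2.
have H := dotp_ge0 (t *: u - v).
rewrite !(dotpBl, dotpBr, dotpZl, dotpZr) -!norm2_sq -/a -/b (dotpC v u) -/c in H.
have ht : t * a ^+ 2 = c by rewrite /t mulfVK // gt_eqF.
have : c ^+ 2 <= (a * b) ^+ 2.
  rewrite ht subrr mulr0 sub0r in H.
  have e : t * c = c ^+ 2 / a ^+ 2 by rewrite /t mulrAC expr2.
  have : c ^+ 2 / a ^+ 2 <= b ^+ 2 by rewrite -e; lra.
  by rewrite ler_pdivrMr // exprMn mulrC.
have ab0 : 0 <= a * b by rewrite mulr_ge0.
move=> h; rewrite leNgt; apply/negP => hc; nra.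
Qed.

Lemma norm2_tri u v : norm2 (u + v) <= norm2 u + norm2 v.
Proof.
rewrite {1}/norm2 -(ger0_norm (addr_ge0 (norm2_ge0 u) (norm2_ge0 v))) -sqrtr_sqr.
apply: ler_wsqrtr.
rewrite !(dotpDl, dotpDr) (dotpC v u) sqrrD -!norm2_sq.
have := cauchy u v; lra.
Qed.

Lemma norm2Z (c : R) u : norm2 (c *: u) = `|c| * norm2 u.
Proof.
by rewrite /norm2 dotpZl dotpZr mulrA -expr2 sqrtrM ?sqr_ge0 // sqrtr_sqr.
Qed.
Lemma norm2N u : norm2 (- u) = norm2 u.
Proof. by rewrite -scaleN1r norm2Z normrN normr1 mul1r. Qed.

Lemma proj_vi (X : set V) (P : V -> V) y z : convex_set X -> is_euclid_proj X P -> X z ->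
  dotp (y - P y) (z - P y) <= 0.
Proof.
move=> cX hP Xz; have [Xp hmin] := hP y.
move: Xp hmin; set p := P y => Xp hmin.
set w := y - p; set d := z - p.
set c := dotp w d; set D := dotp d d.
rewrite leNgt; apply/negP => c0.
have D0 : 0 <= D := dotp_ge0 d.
have cD : 0 < c + D by lra.
pose t := c / (c + D).
have ht : t * (c + D) = c by rewrite /t mulfVK // gt_eqF.
have tp : 0 < t by rewrite /t divr_gt0.
have t1 : t <= 1 by rewrite /t ler_pdivrMr // mul1r; lra.
have Xq : X (p + t *: d).
  have := cX z p (Itv01 (ltW tp) t1) (mem_set Xz) (mem_set Xp).
  move/set_mem; congr X.
  rewrite /d scalerBr addrC; change (t *: z + (1 - t) *: p = t *: z - t *: p + p).
  by rewrite scalerBl scale1r addrA addrAC.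
have := hmin _ Xq.
have -> : y - (p + t *: d) = w - t *: d by rewrite opprD addrA.
rewrite -/w; clearbody w d; move/norm2_le; rewrite !(dotpBl, dotpBr, dotpZl, dotpZr) (dotpC d w) -/c -/D => h.
have h2 : 2 * c <= t * D.
  have : t * (2 * c) <= t * (t * D) by lra.
  by rewrite ler_pM2l.
have : 2 * c * (c + D) <= c * D.
  have -> : c * D = t * D * (c + D) by rewrite mulrAC ht mulrC.
  by rewrite ler_pM2r.
nra.
Qed.

End H.

Theorem corollary1 (R : realType) (n : nat) (X : set 'rV[R]_n)
  (F P : 'rV[R]_n -> 'rV[R]_n) (L gamma eps : R) (x : 'rV[R]_n) :
  X !=set0 -> closed X -> convex_set X ->
  {within X, continuous F} ->
  is_euclid_proj X P ->
  0 <= L ->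
  (forall y z, X y -> X z -> norm2 (F y - F z) <= L * norm2 (y - z)) ->
  X x -> 0 < gamma ->
  norm2 (residual P F gamma x) <= eps ->
  strong_solution X F ((L * gamma + 1) * eps) 0 (P (x - gamma *: F x)) /\
  (0 < L -> gamma <= L^-1 ->
   strong_solution X F (2 * eps) 0 (P (x - gamma *: F x))).
Proof.
move=> _ _ cX _ hP L0 Lip Xx g0 hres.
set y := x - gamma *: F x; set p := P y.
set r := residual P F gamma x in hres *.
have Xp : X p := (hP y).1.
have hxp : x - p = gamma *: r.
  by rewrite /r /residual scalerA mulfV ?gt_eqF // scale1r.
have eps0 : 0 <= eps := le_trans (norm2_ge0 _) hres.
have main : strong_solution X F ((L * gamma + 1) * eps) 0 p.
  split => //; exists (F x - F p - r); split.
    apply: le_trans (norm2_tri _ _) _; rewrite norm2N.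
    have h1 := Lip x p Xx Xp; rewrite hxp norm2Z gtr0_norm // in h1.
    have := norm2_ge0 r; have := mulr_ge0 L0 (ltW g0); nra.
  apply: ge_ereal_sup => _ [z Xz <-]; rewrite lee_fin.
  have e : F p + (F x - F p - r) = F x - r by rewrite addrC addrAC subrK.
  have := proj_vi y cX hP Xz; rewrite -/p.
  have ey : y - p = gamma *: (r - F x) by rewrite /y addrAC hxp scalerBr.
  rewrite ey dotpZl pmulr_rle0 // => h.
  by rewrite e -(opprB r (F x)) -(opprB z p) dotpNl dotpNr opprK.
split => // L0' gL.
case: main => Xp' [phi [hphi hg]]; split => //; exists phi; split => //.
apply: le_trans hphi _; apply: ler_wpM2r => //.
have : L * gamma <= 1 by rewrite -(mulfV (lt0r_neq0 L0')) ler_pM2l.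
lra.
Qed.
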